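(* Assume (A1). Then every connected component of $\mathcal{C}=\{x\in\mathcal{E}:\|h(x)\|\le R\}$ contains a point $\bar z$ with $h(\bar z)=0$.
   Context: $\mathcal{E}$ is a Euclidean space, $h\colon\mathcal{E}\to\mathbb{R}^m$ is $C^\infty$, $\|\cdot\|$ is the 2-norm on $\mathbb{R}^m$, and $\sigma_{\min}(\mathrm{D}h(x))$ denotes the $m$-th singular value of the differential $\mathrm{D}h(x)\colon\mathcal{E}\to\mathbb{R}^m$. (A1): there exist constants $R,\underline{\sigma}>0$ such that $\sigma_{\min}(\mathrm{D}h(x))\ge\underline{\sigma}$ for all $x\in\mathcal{C}=\{x:\|h(x)\|\le R\}$. *)

(* Defs.v *)
From HB Require Import structures.
From mathcomp Require Import all_boot all_order all_algebra.
From mathcomp Require Import all_classical all_reals all_analysis.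
Set Implicit Arguments. Unset Strict Implicit. Unset Printing Implicit Defensive.
Import Order.TTheory GRing.Theory Num.Theory.
Import numFieldNormedType.Exports.
Local Open Scope classical_set_scope.
Local Open Scope ring_scope.

(* The Euclidean space E is modelled as 'rV[R]_n (R^n); R^m as 'rV[R]_m. *)

(* Euclidean 2-norm on row vectors (the library's norm on 'rV is the max norm). *)
Definition norm2 {R : realType} {m : nat} (v : 'rV[R]_m) : R :=
  Num.sqrt (\sum_(i < m) v ord0 i ^+ 2).

Fixpoint Ck {R : realType} {n m : nat} (k : nat) (f : 'rV[R]_n -> 'rV[R]_m) : Prop :=
  match k with
  | 0%N => continuous f
  | k'.+1 => (forall x, differentiable f x) /\
             (forall v : 'rV[R]_n, Ck k' (fun x => 'd f x v))
  end.

Definition smooth {R : realType} {n m : nat} (f : 'rV[R]_n -> 'rV[R]_m) : Prop :=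
  forall k, Ck k f.

(* The differential Dh(x) is represented by the library's Jacobian
   'J h x = lin1_mx ('d h x) (an n x m matrix acting on row vectors,
   v |-> v *m 'J h x); its matrix in column convention is ('J h x)^T. *)

Definition lambda_min {R : realType} {m : nat} (M : 'M[R]_m) : R :=
  inf [set a : R | eigenvalue M a].

(* m-th singular value of an m x n matrix A: square root of the smallest
   eigenvalue of A A^T (equals 0 when m > n, as per convention). *)
Definition sigma_min {R : realType} {m n : nat} (A : 'M[R]_(m, n)) : R :=
  Num.sqrt (lambda_min (A *m A^T)).

(* Main.v *)
Require Import Defs.
From HB Require Import structures.
From mathcomp Require Import all_boot all_order all_algebra.
From mathcomp Require Import all_classical all_reals all_analysis.
Import Order.TTheory GRing.Theory Num.Theory.
Import numFieldNormedType.Exports.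
Local Open Scope classical_set_scope.
Local Open Scope ring_scope.

From mathcomp Require Import ring lra.
Set Implicit Arguments. Unset Strict Implicit. Unset Printing Implicit Defensive.

Definition sq2 {R : realType} {k : nat} (v : 'rV[R]_k) : R := \sum_(i < k) v ord0 i ^+ 2.

Lemma sq2_ge0 (R : realType) k (v : 'rV[R]_k) : 0 <= sq2 v.
Proof. by apply: sumr_ge0 => i _; rewrite sqr_ge0. Qed.

Lemma sq2E (R : realType) k (v : 'rV[R]_k) : (v *m v^T) ord0 ord0 = sq2 v.
Proof. by rewrite !mxE; apply: eq_bigr => i _; rewrite mxE expr2. Qed.

Lemma sq2_cont (R : realType) k : continuous (@sq2 R k).
Proof.
rewrite /sq2; apply: continuous_big => //=.
  exact: add_continuous.
move=> i _ x; apply: continuousM; exact: coord_continuous.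
Qed.

Lemma bnd_set (R:realType) k (A : set 'rV[R]_k) B :
  (forall x, A x -> `|x| <= B) -> bounded_set A.
Proof.
move=> hB; rewrite /= /bounded_near; near=> M => x Ax /=.
apply: le_trans (hB _ Ax) _; near: M; apply: nbhs_pinfty_ge; exact: num_real.
Unshelve. all: by end_near. Qed.

Lemma entry_le_norm (R : realType) k (v : 'rV[R]_k) i : `|v ord0 i| <= `|v|.
Proof.
rewrite (_ : `|v| = mx_norm v) // mx_normrE.
by apply/bigmax_geP; right => /=; exists (ord0, i).
Qed.

Lemma norm_le_entries (R : realType) k (v : 'rV[R]_k) B : 0 <= B ->
  (forall i, `|v ord0 i| <= B) -> `|v| <= B.
Proof.
move=> B0 hB; rewrite (_ : `|v| = mx_norm v) // mx_normrE.
apply: bigmax_le => //= -[a b] _ /=; rewrite (ord1 a); exact: hB.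
Qed.

Lemma entry_sq_le (R : realType) k (v : 'rV[R]_k) i : v ord0 i ^+ 2 <= sq2 v.
Proof.
rewrite /sq2 (bigD1 i) //= lerDl; apply: sumr_ge0 => j _; exact: sqr_ge0.
Qed.

Lemma norm_sq_le (R : realType) k (v : 'rV[R]_k) : `|v| ^+ 2 <= sq2 v.
Proof.
have h : `|v| <= Num.sqrt (sq2 v).
  apply: norm_le_entries => // i.
  by rewrite -sqrtr_sqr ler_sqrt ?sq2_ge0 // entry_sq_le.
by rewrite -(sqr_sqrtr (sq2_ge0 v)) lerXn2r // ?nnegrE ?sqrtr_ge0.
Qed.

Lemma sq2_eq0 (R : realType) k (v : 'rV[R]_k) : sq2 v = 0 -> v = 0.
Proof.
move=> h; apply/matrixP => i j; rewrite (ord1 i) mxE.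
have := entry_sq_le v j; rewrite h => hj; apply/eqP.
by rewrite -sqrf_eq0 eq_le hj sqr_ge0.
Qed.

Lemma sq2Z (R : realType) k (c : R) (v : 'rV[R]_k) : sq2 (c *: v) = c ^+ 2 * sq2 v.
Proof. rewrite /sq2 mulr_sumr; apply: eq_bigr => i _; by rewrite mxE exprMn. Qed.

Lemma bilin_expand (R : realType) k (N : 'M[R]_k) (x y : 'rV[R]_k) (t : R) :
  ((x + t *: y) *m N *m (x + t *: y)^T) ord0 ord0 =
  (x *m N *m x^T) ord0 ord0 + t * ((x *m N *m y^T) ord0 ord0 + (y *m N *m x^T) ord0 ord0)
  + t ^+ 2 * (y *m N *m y^T) ord0 ord0.
Proof.
rewrite linearD linearZ /= !mulmxDl !mulmxDr -!scalemxAl -!scalemxAr ?scalerA.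
set a := x *m N *m x^T; set b := x *m N *m y^T; set c := y *m N *m x^T.
set d := y *m N *m y^T.
rewrite !mxE. ring.
Qed.

Lemma bilin_sym (R : realType) k (N : 'M[R]_k) (x y : 'rV[R]_k) : N^T = N ->
  (y *m N *m x^T) ord0 ord0 = (x *m N *m y^T) ord0 ord0.
Proof.
move=> NT; rewrite -[in LHS](trmxK (y *m N *m x^T)) mxE.
by rewrite !trmx_mul trmxK NT mulmxA.
Qed.

Lemma sq2_mul (R : realType) m n (A : 'M[R]_(m, n)) (v : 'rV[R]_m) :
  sq2 (v *m A) = (v *m (A *m A^T) *m v^T) ord0 ord0.
Proof. by rewrite -sq2E trmx_mul !mulmxA. Qed.

Lemma mulA_cont (R : realType) m n (A : 'M[R]_(m, n)) :
  continuous (fun v : 'rV[R]_m => sq2 (v *m A)).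
Proof.
have -> : (fun v : 'rV[R]_m => sq2 (v *m A)) =
   (fun v => \sum_(j < n) (\sum_(i < m) v ord0 i * A i j) ^+ 2).
  by apply/funext => v; rewrite /sq2; apply: eq_bigr => j _; rewrite mxE.
apply: continuous_big => //=; first exact: add_continuous.
move=> j _.
have hc : continuous (fun v : 'rV[R]_m => \sum_(i < m) v ord0 i * A i j).
  apply: continuous_big => //=; first exact: add_continuous.
  move=> i _ y; apply: continuousM; first exact: coord_continuous.
  exact: cst_continuous.
move=> x; apply: continuousM; exact: hc.
Qed.

Lemma sq2_expand (R : realType) k (x y : 'rV[R]_k) (t : R) :
  sq2 (x + t *: y) = sq2 x + t * (2 * (x *m y^T) ord0 ord0) + t ^+ 2 * sq2 y.
Proof.
have e : forall z : 'rV[R]_k, sq2 z = (z *m 1%:M *m z^T) ord0 ord0.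
  by move=> z; rewrite mulmx1 sq2E.
rewrite !e bilin_expand (@bilin_sym _ _ 1%:M x y) ?trmx1 // mulmx1; ring.
Qed.

Lemma sq2_0 (R : realType) k : sq2 (0 : 'rV[R]_k) = 0.
Proof. by rewrite /sq2 big1 // => i _; rewrite mxE expr0n. Qed.

Lemma sq2_gt0 (R : realType) k (v : 'rV[R]_k) : v != 0 -> 0 < sq2 v.
Proof.
move=> vn0; rewrite lt_def sq2_ge0 andbT; apply/eqP => /sq2_eq0 v0.
by rewrite v0 eqxx in vn0.
Qed.

Lemma rayleigh (R : realType) m n (A : 'M[R]_(m, n)) s :
  0 < s -> s <= sigma_min A -> forall u : 'rV_m, s ^+ 2 * sq2 u <= sq2 (u *m A).
Proof.
move=> s0 hs; case: m A hs => [|m'] A hs u.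
  by rewrite /sq2 big_ord0 mulr0; exact: sq2_ge0.
pose S := [set v : 'rV[R]_m'.+1 | sq2 v = 1].
have S0 : S !=set0.
  exists (delta_mx 0 0); rewrite /S /= /sq2 (bigD1 ord0) //= big1 => [|i /negbTE ni].
    by rewrite mxE eqxx /= expr1n addr0.
  by rewrite mxE ni andbF /= expr2 mulr0.
have cS : compact S.
  have hb : forall v, S v -> `|v| <= 1.
    move=> v Sv; apply: (@norm_le_entries R _ v 1) => // i.
    have := entry_sq_le v i; rewrite Sv => h.
    rewrite ler_norml; apply/andP; split; nra.
  have bS : bounded_set S by exact: bnd_set hb.
  apply: bounded_closed_compact => //.
  have : closed (@sq2 R m'.+1 @^-1` [set x : R | x = 1]).
    apply: (@preimage_closed _ _ (@sq2 R m'.+1) [set x : R | x = 1]).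
      by move=> x _; exact: sq2_cont.
    exact: closed_eq.
  by [].
have [v0 /set_mem Sv0 minv] := compact_EVT_min S0 cS
   (continuous_subspaceT (@mulA_cont _ _ _ A)).
set l0 := sq2 (v0 *m A).
have claim1 : forall u : 'rV_m'.+1, l0 * sq2 u <= sq2 (u *m A).
  move=> w; have [w0|wn0] := eqVneq (sq2 w) 0.
    by rewrite w0 mulr0 sq2_ge0.
  have wp : 0 < sq2 w by rewrite lt_def wn0 sq2_ge0.
  pose c := (Num.sqrt (sq2 w))^-1.
  have c2 : c ^+ 2 * sq2 w = 1.
    by rewrite /c exprVn sqr_sqrtr ?sq2_ge0 // mulVf.
  have := minv (c *: w) (mem_set _); rewrite /S /= sq2Z c2 => /(_ erefl).
  rewrite -scalemxAl sq2Z /l0 => h.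
  have := ler_wpM2r (sq2_ge0 w) h.
  by rewrite mulrAC c2 mul1r.
set M := A *m A^T.
have MT : M^T = M by rewrite /M trmx_mul trmxK.
have Sv1 : sq2 v0 = 1 by [].
set w := v0 *m M - l0 *: v0.
set D := (w *m M *m w^T) ord0 ord0 - l0 * sq2 w.
have key : forall t, 0 <= 2 * t * sq2 w + t ^+ 2 * D.
  move=> t; have := claim1 (v0 + t *: w).
  rewrite sq2_mul bilin_expand (@bilin_sym _ _ M v0 w) // sq2_expand Sv1.
  have -> : (v0 *m M *m w^T) ord0 ord0 = sq2 w + l0 * (v0 *m w^T) ord0 ord0.
    have -> : v0 *m M = w + l0 *: v0 by rewrite /w subrK.
    by rewrite mulmxDl -scalemxAl mxE [in X in _ + X]mxE sq2E.
  have -> : (v0 *m M *m v0^T) ord0 ord0 = l0 by rewrite -sq2_mul.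
  rewrite /D -/M; set q : R := (v0 *m w^T) ord0 ord0; set P : R := (w *m M *m w^T) ord0 ord0; set Q := sq2 w => h.
  have -> : 2 * t * Q + t ^+ 2 * (P - l0 * Q) = (l0 + t * (Q + l0 * q + (Q + l0 * q)) + t ^+ 2 * P) - l0 * (1 + t * (2 * q) + t ^+ 2 * Q) by ring.
  by rewrite subr_ge0.
have w0 : sq2 w = 0.
  apply/eqP; rewrite eq_le sq2_ge0 andbT; rewrite leNgt; apply/negP => Sw.
  have [e eE] : exists e, e = `|D| + 1 by eexists.
  have e0 : 0 < e by rewrite eE ltr_pwDr // normr_ge0.
  have := key (- (sq2 w / e)).
  have -> : 2 * (- (sq2 w / e)) * sq2 w + (- (sq2 w / e)) ^+ 2 * D =
            (sq2 w / e) ^+ 2 * (D - 2 * e).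
    by field; rewrite gt_eqF.
  have hD : D - 2 * e < 0.
    have h1 := ler_norm D; have h0 := normr_ge0 D; rewrite eE; lra.
  have hp : 0 < (sq2 w / e) ^+ 2 by rewrite exprn_gt0 // divr_gt0.
  nra.
have eig : v0 *m M = l0 *: v0.
  by apply/eqP; rewrite -subr_eq0; apply/eqP; apply: sq2_eq0.
have v0n : v0 != 0 by apply/eqP => v00; move: Sv1; rewrite v00 sq2_0 => /esym/eqP; rewrite oner_eq0.
have Eg0 : forall a, eigenvalue M a -> 0 <= a.
  move=> a /eigenvalueP [v hv vn0].
  have : (v *m M *m v^T) ord0 ord0 = a * sq2 v by rewrite hv -scalemxAl mxE sq2E.
  rewrite -sq2_mul => h; have := sq2_ge0 (v *m A); have := sq2_gt0 vn0; nra.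
have lml0 : lambda_min M <= l0.
  rewrite /lambda_min; apply: (@ge_inf _ [set a | eigenvalue M a]).
    by exists 0 => a /Eg0.
  by apply/eigenvalueP; exists v0.
move: hs; rewrite /sigma_min -/M => hs.
have lm0 : 0 <= lambda_min M.
  rewrite leNgt; apply/negP => /ltW /ler0_sqrtr h; rewrite h in hs; lra.
have s2 : s ^+ 2 <= lambda_min M.
  by rewrite -(sqr_sqrtr lm0); have := sqrtr_ge0 (lambda_min M); nra.
apply: le_trans (claim1 u); apply: ler_wpM2r; [exact: sq2_ge0 | lra].
Qed.

Lemma deriv_est (R : realType) n m (h : 'rV[R]_n -> 'rV[R]_m) z d (δ : R) :
  differentiable h z -> 0 < δ ->
  exists2 η : R, 0 < η & forall s, 0 < s -> s < η ->
    `|h (z + s *: d) - h z - s *: ('d h z d)| <= s * δ.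
Proof.
move=> dz δ0.
have hcv : (fun t : R => t^-1 *: ((h \o shift z) (t *: d) - h z)) @ 0^' --> 'd h z d.
  rewrite -deriveE //; exact: (diff_derivable dz).
move/cvgrPdist_le/(_ δ δ0): hcv => hn.
move: hn; rewrite /dnbhs /within => /nbhs_ballP [η /= η0 Hη].
exists η => // s s0 sη.
have := Hη s; rewrite /ball /= sub0r normrN gtr0_norm // => /(_ sη).
rewrite gt_eqF // => /(_ isT) h1.
have -> : h (z + s *: d) - h z - s *: 'd h z d =
    - (s *: ('d h z d - s^-1 *: (h (s *: d + z) - h z))).
  rewrite scalerBr scalerA mulfV ?gt_eqF // scale1r (addrC z).
  by rewrite opprB.
rewrite normrN normrZ gtr0_norm // ler_pM2l //.
Qed.

Lemma sq2_pert (R : realType) k (w r : 'rV[R]_k) (W ρ : R) :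
  (forall i, `|w ord0 i| <= W) -> `|r| <= ρ ->
  sq2 (w + r) <= sq2 w + k%:R * (2 * W * ρ + ρ ^+ 2).
Proof.
move=> hW hr.
have -> : k%:R * (2 * W * ρ + ρ ^+ 2) = \sum_(i < k) (2 * W * ρ + ρ ^+ 2).
  by rewrite sumr_const card_ord mulr_natl.
rewrite /sq2 -big_split /=; apply: ler_sum => i _.
rewrite mxE.
have h1 := hW i; have h2 := le_trans (entry_le_norm r i) hr.
have h3 := ler_norm (w ord0 i); have h4 := ler_norm (- w ord0 i); rewrite normrN in h4.
have h5 := ler_norm (r ord0 i); have h6 := ler_norm (- r ord0 i); rewrite normrN in h6.
have h7 := normr_ge0 (r ord0 i); have h8 := normr_ge0 (w ord0 i).
have h9 : `|w ord0 i * r ord0 i| <= W * ρ.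
  by rewrite normrM; apply: ler_pM.
have h10 := ler_norm (w ord0 i * r ord0 i).
have h11 : r ord0 i ^+ 2 <= ρ ^+ 2.
  by rewrite -real_normK ?num_real // lerXn2r // ?nnegrE // (le_trans h7 h2).
nra.
Qed.

Lemma num_core (R : realType) (a2 a q p W δ κ s M dn e σ G : R) :
  0 < a -> a ^+ 2 = a2 -> 0 < σ -> e = σ / 2 -> 0 < dn -> κ = σ * a * dn ->
  κ <= q -> 0 <= M -> 0 <= W -> 0 <= p -> δ = κ / (4 * (M * W + 1)) ->
  0 < s -> s <= κ / (4 * (p + M * δ ^+ 2 + 1)) -> s <= a / (e * dn + 1) ->
  G <= a2 - 2 * s * q + s ^+ 2 * p + M * (2 * W * (s * δ) + (s * δ) ^+ 2) ->
  G < (a - e * s * dn) ^+ 2 /\ 0 < a - e * s * dn.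
Proof.
move=> a0 aa s0 eE dn0 kE kq M0 W0 p0 dE s0' s1 s2 hG.
have k0 : 0 < κ by rewrite kE !mulr_gt0.
have d0 : 0 <= δ.
  rewrite dE; apply: divr_ge0; first exact: ltW.
  apply: mulr_ge0 => //; apply: addr_ge0 => //; exact: mulr_ge0.
have h1 : 2 * M * W * δ <= κ / 2.
  have pos0 : 0 < 4 * (M * W + 1) by have := mulr_ge0 M0 W0; nra.
  have e1 : 4 * (M * W + 1) * δ = κ.
    by rewrite dE mulrC divfK // gt_eqF.
  have := mulr_ge0 (mulr_ge0 M0 W0) d0; nra.
have h2 : s * (p + M * δ ^+ 2) <= κ / 4.
  have pos : 0 < 4 * (p + M * δ ^+ 2 + 1).
    by have := mulr_ge0 M0 (sqr_ge0 δ); nra.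
  move: s1; rewrite ler_pdivlMr // => s1.
  have := mulr_ge0 M0 (sqr_ge0 δ); nra.
have h3 : G < a2 - s * κ.
  have e2 : a2 - 2 * s * q + s ^+ 2 * p + M * (2 * W * (s * δ) + (s * δ) ^+ 2) =
            a2 - 2 * s * q + s * (s * (p + M * δ ^+ 2) + 2 * M * W * δ) by ring.
  rewrite e2 in hG.
  have : s * (s * (p + M * δ ^+ 2) + 2 * M * W * δ) <= s * (3 / 4 * κ).
    by rewrite ler_pM2l //; lra.
  nra.
have h4 : e * s * dn < a.
  have pos : 0 < e * dn + 1 by rewrite eE; have := mulr_gt0 s0 dn0; nra.
  move: s2; rewrite ler_pdivlMr // => s2.
  nra.
split; last by lra.
have : a2 - s * κ <= (a - e * s * dn) ^+ 2.
  rewrite -aa kE eE.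
  have : 0 <= (σ / 2 * s * dn) ^+ 2 by exact: sqr_ge0.
  have -> : (a - σ / 2 * s * dn) ^+ 2 = a ^+ 2 - s * (σ * a * dn) + (σ / 2 * s * dn) ^+ 2 by field.
  lra.
lra.
Qed.

Unset Implicit Arguments. Set Strict Implicit. Set Printing Implicit Defensive.

Theorem mainTheorem6 (R : realType) (n m : nat) (h : 'rV[R]_n -> 'rV[R]_m)
  (R0 sigma : R) :
  smooth h -> 0 < R0 -> 0 < sigma ->
  (forall x, norm2 (h x) <= R0 -> sigma <= sigma_min ('J h x)^T) ->
  forall x0 : 'rV[R]_n, norm2 (h x0) <= R0 ->
    exists z, connected_component [set x | norm2 (h x) <= R0] x0 z /\ h z = 0.
Proof.
move=> hsm R0p sp hA x0 hx0.
have hc : continuous h := hsm 0%N.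
have hd : forall x, differentiable h x := (hsm 1%N).1.
have g_cont : continuous (fun v : 'rV[R]_m => Num.sqrt (sq2 v)).
  move=> v; exact: (@continuous_comp _ _ _ (@sq2 R m) Num.sqrt v (@sq2_cont R m v) (@sqrt_continuous R (sq2 v))).
have fcont : continuous (fun x => norm2 (h x)).
  move=> x; exact: (@continuous_comp _ _ _ h (fun v => Num.sqrt (sq2 v)) x (hc x) (g_cont (h x))).
set C := [set x | norm2 (h x) <= R0].
have Ccl : closed C.
  have : closed ((fun x => norm2 (h x)) @^-1` [set r : R | r <= R0]).
    apply: preimage_closed; [move=> y _; exact: fcont | exact: closed_le].
  by [].
set K := connected_component C x0.
have Kcl : closed K := @component_closed _ C x0 Ccl.
have KC : K `<=` C := @connected_component_sub _ C x0.
have Kx0 : K x0 := @connected_component_refl _ C x0 hx0.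
pose eps := sigma / 2.
have eps0 : 0 < eps by rewrite divr_gt0.
pose rho := R0 / eps + 1.
pose B := [set y : 'rV[R]_n | `|y - x0| <= rho].
have dcont : continuous (fun y : 'rV[R]_n => `|y - x0|).
  have hs : continuous (fun y : 'rV[R]_n => y - x0).
    move=> y; apply: continuousB; [exact: cvg_id | exact: cst_continuous].
  move=> y; exact: (@continuous_comp _ _ _ (fun y : 'rV[R]_n => y - x0) (fun v => `|v|) y (hs y) (@norm_continuous _ _ (y - x0))).
have Bcl : closed B.
  have : closed ((fun y => `|y - x0|) @^-1` [set r : R | r <= rho]).
    apply: preimage_closed; [move=> y _; exact: dcont | exact: closed_le].
  by [].
have Bx0 : B x0.
  by rewrite /B /= subrr normr0 /rho addr_ge0 // divr_ge0 // ltW.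
pose S := K `&` B.
have Sc : compact S.
  have hb : forall y, S y -> `|y| <= `|x0| + rho.
    move=> y [_ By]; rewrite -[y](subrK x0) (le_trans (ler_normD _ _)) //.
    by rewrite addrC lerD2l.
  apply: bounded_closed_compact; first exact: bnd_set hb.
  exact: closedI.
have S0 : S !=set0 by exists x0.
pose F y := norm2 (h y) + eps * `|y - x0|.
have Fc : continuous F.
  move=> y; rewrite /F; apply: (cvgD (fcont y)).
  apply: cvgM; [exact: cvg_cst | exact: dcont].
have [z /set_mem [Kz Bz] minz] := compact_EVT_min S0 Sc (continuous_subspaceT Fc).
exists z; split => //.
have Cz : C z := KC z Kz.
have f0 : forall y, 0 <= norm2 (h y) by move=> y; exact: sqrtr_ge0.
have hzx : `|z - x0| <= R0 / eps.
  have := minz x0 (mem_set (conj Kx0 Bx0)); rewrite /F subrr normr0 mulr0 addr0 => hm.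
  rewrite ler_pdivlMr // mulrC; have := f0 z; lra.
apply: sq2_eq0; apply/eqP; rewrite eq_le sq2_ge0 andbT leNgt; apply/negP => a2p.
pose u := h z.
pose a2 := sq2 u; pose a := Num.sqrt a2.
have a0 : 0 < a by rewrite sqrtr_gt0.
have aa : a ^+ 2 = a2 by rewrite sqr_sqrtr // ltW.
pose J := 'J h z; pose A := J^T.
pose d := - (u *m A).
pose q := sq2 (u *m A).
have hq : sigma ^+ 2 * a2 <= q := rayleigh sp (hA z Cz) u.
have qd : sq2 d = q by rewrite /d -scaleN1r sq2Z sqrrN expr1n mul1r.
pose L := 'd h z d.
have LE : L = d *m J by rewrite /L /J /jacobian mul_rV_lin1.
have uL : (u *m L^T) ord0 ord0 = - q.
  rewrite LE /d mulNmx linearN /= mulmxN trmx_mul mulmxA mxE /q -sq2E.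
  by [].
pose p := sq2 L.
pose dn := `|d|.
have dn2 : dn ^+ 2 <= q by rewrite -qd; exact: norm_sq_le.
have q0 : 0 < q := lt_le_trans (mulr_gt0 (exprn_gt0 2 sp) a2p) hq.
have dn0 : 0 < dn.
  rewrite normr_gt0; apply/eqP => d0; move: q0; rewrite -qd d0 sq2_0 ltxx.
  by [].
pose kap := sigma * a * dn.
have kap0 : 0 < kap by rewrite !mulr_gt0.
have kq : kap <= q.
  have h1 : kap ^+ 2 <= q ^+ 2.
    rewrite /kap !exprMn aa expr2.
    apply: ler_pM => //; [apply: mulr_ge0; [nra | exact: sq2_ge0] | exact: sqr_ge0].
  nra.
pose W := `|u| + `|L|.
have W0 : 0 <= W by rewrite addr_ge0.
pose M := (m%:R : R).
have M0 : 0 <= M by exact: ler0n.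
pose δ := kap / (4 * (M * W + 1)).
have δ0 : 0 < δ.
  by rewrite /δ divr_gt0 //; have := mulr_ge0 M0 W0; nra.
have [η η0 Hη] := deriv_est d (hd z) δ0.
pose c1 := 1 / (dn + 1).
pose c2 := kap / (4 * (p + M * δ ^+ 2 + 1)).
pose c3 := a / (eps * dn + 1).
have c10 : 0 < c1 by rewrite /c1 divr_gt0 // addr_gt0.
have c20 : 0 < c2.
  rewrite /c2 divr_gt0 //; have := mulr_ge0 M0 (sqr_ge0 δ); have := sq2_ge0 L; rewrite -/p; nra.
have c30 : 0 < c3 by rewrite /c3 divr_gt0 // addr_gt0 // mulr_gt0.
pose t1 := Num.min (Num.min 1 c1) (Num.min c2 c3).
have t10 : 0 < t1 by rewrite /t1 !lt_min ltr01 c10 c20 c30.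
pose t := Num.min η t1 / 2.
have t0 : 0 < t by rewrite /t divr_gt0 // lt_min η0 t10.
have mη : Num.min η t1 <= η by rewrite ge_min lexx.
have mt1 : Num.min η t1 <= t1 by rewrite ge_min lexx orbT.
have m0 : 0 < Num.min η t1 by rewrite lt_min η0 t10.
have tE : t * 2 = Num.min η t1 by rewrite /t divfK // pnatr_eq0.
have tη : t < η by lra.
have tt1 : t <= t1 by lra.
have key : forall s, 0 < s -> s <= t ->
    norm2 (h (z + s *: d)) < a - eps * s * dn.
  move=> s s0 st.
  have st1 : s <= t1 := le_trans st tt1.
  have sη : s < η := le_lt_trans st tη.
  have hs1 : s <= 1 by move: st1; rewrite /t1 !le_min => /andP[/andP[]].
  have hs2 : s <= c2 by move: st1; rewrite /t1 !le_min => /andP[_ /andP[]].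
  have hs3 : s <= c3 by move: st1; rewrite /t1 !le_min => /andP[_ /andP[]].
  have hr := Hη s s0 sη.
  pose r := h (z + s *: d) - (u + s *: L).
  have hdec : h (z + s *: d) = (u + s *: L) + r by rewrite /r [RHS]addrC subrK.
  have hr' : `|r| <= s * δ by rewrite /r opprD addrA.
  have hW : forall i, `|(u + s *: L) ord0 i| <= W.
    move=> i; rewrite mxE (le_trans (ler_normD _ _)) // /W lerD //.
      exact: entry_le_norm.
    rewrite mxE normrM (ger0_norm (ltW s0)).
    apply: (le_trans _ (entry_le_norm L i)); exact: ler_piMl (normr_ge0 _) hs1.
  have hG := sq2_pert hW hr'.
  rewrite sq2_expand uL in hG.
  have hG' : sq2 (h (z + s *: d)) <= a2 - 2 * s * q + s ^+ 2 * p +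
      M * (2 * W * (s * δ) + (s * δ) ^+ 2).
    rewrite hdec; apply: (le_trans hG); rewrite /a2 /p /M; lra.
  have [hlt hpos] := @num_core R a2 a q p W δ kap s M dn eps sigma _
    a0 aa sp erefl dn0 erefl kq M0 W0 (sq2_ge0 L) erefl s0 hs2 hs3 hG'.
  have -> : norm2 (h (z + s *: d)) = Num.sqrt (sq2 (h (z + s *: d))) by [].
  rewrite -[X in _ < X](gtr0_norm hpos) -sqrtr_sqr ltr_sqrt //.
  by rewrite exprn_gt0.
have fz : norm2 (h z) = a by [].
have hdist : forall s, 0 <= s -> `|z + s *: d - x0| <= `|z - x0| + s * dn.
  move=> s s0; rewrite addrAC (le_trans (ler_normD _ _)) // normrZ ger0_norm //.
have tdn : t * dn <= 1.
  have : t <= c1 by move: tt1; rewrite /t1 !le_min => /andP[/andP[]].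
  rewrite /c1 ler_pdivlMr ?addr_gt0 // => h1; nra.
have Bt : B (z + t *: d).
  rewrite /B /=; apply: (le_trans (hdist t (ltW t0))); rewrite /rho; lra.
have Kt : K (z + t *: d).
  pose seg := (fun s : R => z + s *: d) @` `[0, t].
  have segc : connected seg.
    apply: connected_continuous_connected; first exact: segment_connected.
    apply: continuous_subspaceT => s.
    have hZ : (fun x : R => x *: d) @ s --> s *: d by apply: cvgZr_tmp; exact: cvg_id.
    exact: (cvgD (cvg_cst z) hZ).
  have segC : seg `<=` C.
    move=> y [s /=]; rewrite in_itv /= => /andP[s0 st] <-.
    have [->|sn0] := eqVneq s 0; first by rewrite scale0r addr0.
    have sp0 : 0 < s by rewrite lt_def sn0 s0.
    rewrite /C /=; have := key s sp0 st; rewrite -fz in Cz *.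
    have := mulr_gt0 (mulr_gt0 eps0 sp0) dn0; move: Cz; rewrite /C /=; lra.
  have segz : seg z.
    exists 0; last by rewrite scale0r addr0.
    by rewrite /= in_itv /= lexx (ltW t0).
  have := connected_component_max segz segC segc.
  rewrite -(same_connected_component Kz) => /(_ (z + t *: d)); apply.
  by exists t => //; rewrite /= in_itv /= lexx (ltW t0).
have := minz (z + t *: d) (mem_set (conj Kt Bt)).
rewrite /F; have := key t t0 (lexx t); have := hdist t (ltW t0); rewrite fz.
move=> h1 h2 h3.
have := ler_pM2l eps0; move=> /(_ `|z + t *: d - x0| (`|z - x0| + t * dn)); rewrite h1 => /esym h4.
move: h4; rewrite mulrDr => h4; lra.
Qed.
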